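(* Consider a stochastic $K$-armed bandit ($K\ge2$): at each round $t$ a reward vector $\mathbf R_t\in[-R_{\max},R_{\max}]^K$ is drawn i.i.d. from a fixed distribution with mean $\mathbf r$, where $r(a)\ne r(a')$ for $a\neq a'$; let $\Delta=\min_{a\ne a'}|r(a)-r(a')|$. Let $\eta>0$, $\alpha>0$, and run LB-SGB: starting from $\boldsymbol\theta_1=\mathbf 0$, at round $t$ sample $a_t\sim\pi_{\boldsymbol\theta_t}$ (softmax policy), observe $R_t(a_t)$, form $\hat r_t(a)=\mathbb I\{a_t=a\}R_t(a_t)/\pi_{\boldsymbol\theta_t}(a)$ and the stochastic gradient $$\widehat\nabla\Phi_\eta(\boldsymbol\theta_t)=(\mathrm{diag}(\pi_{\boldsymbol\theta_t})-\pi_{\boldsymbol\theta_t}\pi_{\boldsymbol\theta_t}^\top)\hat{\mathbf r}_t+\frac1\eta(\mathbf 1-K\pi_{\boldsymbol\theta_t}),$$ and update $\boldsymbol\theta_{t+1}=\boldsymbol\theta_t+\alpha\widehat\nabla\Phi_\eta(\boldsymbol\theta_t)$. Let $\Phi_\eta(\boldsymbol\theta)=\pi_{\boldsymbol\theta}^\top\mathbf r+\frac1\eta\sum_a\log\pi_{\boldsymbol\theta}(a)$. Then for all $t\ge1$, $$\mathbb E_t\big[\|\widehat\nabla\Phi_\eta(\boldsymbol\theta_t)\|_2^2\big]\le\frac{16R_{\max}^3K^{3/2}}{\Delta^2}\|\nabla\Phi_\eta(\boldsymbol\theta_t)\|_2+b(\eta),\qquad b(\eta)=\frac{2K}{\eta}\Big(\frac{4K}{\eta}+\frac{16R_{\max}^3K^{3/2}}{\Delta^2}\Big),$$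 where $\mathbb E_t$ is the expectation over the round-$t$ randomness ($a_t$ and $\mathbf R_t$) conditional on the past.
   Context: Softmax policy: $\pi_{\boldsymbol\theta}(a)=e^{\theta(a)}/\sum_b e^{\theta(b)}$. $\mathbf 1$ is the all-ones vector. *)

(* Defs.v *)
From HB Require Import structures.
From mathcomp Require Import all_boot all_order all_algebra.
From mathcomp Require Import all_classical all_reals all_analysis.
Set Implicit Arguments. Unset Strict Implicit. Unset Printing Implicit Defensive.
Import Order.TTheory GRing.Theory Num.Theory.
Import numFieldNormedType.Exports.
Local Open Scope ring_scope.

Section LBSGB.
Variables (R : realType) (K : nat).

Definition softmax (th : 'cV[R]_K) : 'cV[R]_K :=
  \col_a (expR (th a 0) / \sum_b expR (th b 0)).

Definition l2norm (v : 'cV[R]_K) : R := Num.sqrt (\sum_i v i 0 ^+ 2).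

Definition rhat (th : 'cV[R]_K) (a : 'I_K) (x : R) : 'cV[R]_K :=
  \col_b (if b == a then x / softmax th b 0 else 0).

Definition grad_hat (eta : R) (th : 'cV[R]_K) (a : 'I_K) (x : R) : 'cV[R]_K :=
  let p := softmax th in
  (diag_mx p^T - p *m p^T) *m rhat th a x
  + eta^-1 *: (const_mx 1 - K%:R *: p).

Definition lbsgb_step (eta alpha : R) (th : 'cV[R]_K) (a : 'I_K) (x : R) :=
  th + alpha *: grad_hat eta th a x.

Definition Phi (eta : R) (r : 'cV[R]_K) (th : 'cV[R]_K) : R :=
  ((softmax th)^T *m r) 0 0 + eta^-1 * \sum_a ln (softmax th a 0).

Definition gradPhi (eta : R) (r : 'cV[R]_K) (th : 'cV[R]_K) : 'cV[R]_K :=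
  \col_i ('D_(delta_mx i 0 : 'cV[R]_K) (Phi eta r) th).

(* LB-SGB iterate theta_t after the history (a_1,w_1),...,(a_{t-1},w_{t-1}),
   where w_s is the round-s sample outcome and Rw a w the reward of arm a;
   starts from theta_1 = 0. *)
Definition lbsgb_iterate (T : Type) (eta alpha : R) (Rw : 'I_K -> T -> R)
  (hist : seq ('I_K * T)) : 'cV[R]_K :=
  foldl (fun th p => lbsgb_step eta alpha th p.1 (Rw p.1 p.2)) 0 hist.

End LBSGB.

(* Main.v *)
Require Import Defs.
From HB Require Import structures.
From mathcomp Require Import all_boot all_order all_algebra.
From mathcomp Require Import all_classical all_reals all_analysis.
From mathcomp Require Import ring lra.
Import Order.TTheory GRing.Theory Num.Theory.
Import numFieldNormedType.Exports.
Local Open Scope ring_scope.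
Set Implicit Arguments. Unset Strict Implicit. Unset Printing Implicit Defensive.

Section Core.
Variables (R : realFieldType) (K : nat).

Lemma dsum_split (p A B : 'I_K -> R) : \sum_a p a = 1 ->
  \sum_a \sum_b p a * p b * (A a + B b) = \sum_a p a * A a + \sum_b p b * B b.
Proof.
move=> sp.
transitivity (\sum_a (p a * A a + p a * \sum_b p b * B b)).
  apply: eq_bigr => a _.
  rewrite mulr_sumr -[p a * A a]mulr1 -sp mulr_sumr -big_split /=.
  by apply: eq_bigr => b _; ring.
by rewrite big_split /= -mulr_suml sp mul1r.
Qed.

Lemma core (p r : 'I_K -> R) (Rmax Delta eta G C : R) :
  (2 <= K)%N -> (forall a, 0 < p a) -> \sum_a p a = 1 ->
  0 < Delta -> Delta <= 2 * Rmax ->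
  (forall a b, a != b -> Delta <= `|r a - r b|) -> 0 < eta ->
  (forall a, `|p a * (r a - \sum_b p b * r b) + eta^-1 * (1 - K%:R * p a)| <= G) ->
  16 * Rmax ^+ 3 * K%:R / Delta ^+ 2 <= C ->
  \sum_a p a * (\sum_b (Rmax ^+ 2 * ((b == a)%:R - p b) ^+ 2
      + 2 * Rmax * `|(b == a)%:R - p b| * `|1 - K%:R * p b| / eta
      + (1 - K%:R * p b) ^+ 2 / eta ^+ 2))
  <= C * G + 2 * K%:R / eta * (4 * K%:R / eta + C).
Proof.
move=> K2 p0 sp D0 D2R Dr e0 gG hC.
have eqle (x y : R) : x = y -> x <= y by move=> ->.
have ge0p a : 0 <= p a by exact: ltW.
have p1 a : p a <= 1.
  by rewrite -sp (bigD1 a) //= lerDl sumr_ge0.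
have sum_ne a : \sum_(b | b != a) p b = 1 - p a.
  by rewrite -sp [X in _ = X - _](bigD1 a) //= [p a + _]addrC addrK.
have Kr : (2 <= K%:R :> R) by rewrite (ler_nat R 2).
have R0 : 0 < Rmax by lra.
have hv b : `|1 - K%:R * p b| <= K%:R.
  have := p1 b; have := ge0p b => h0 h1.
  have h2 : 0 <= K%:R * (1 - p b) by rewrite mulr_ge0 // subr_ge0.
  have h3 : 0 <= K%:R * p b by rewrite mulr_ge0.
  rewrite ler_norml; apply/andP; split; lra.
have hd a b : `|(b == a)%:R - p b| <= 1.
  case: eqP => _ /=; last by rewrite sub0r normrN ger0_norm.
  by rewrite ger0_norm ?subr_ge0 ?p1 //; have := ge0p b; lra.
have sd a : \sum_b `|(b == a)%:R - p b| = 2 * (1 - p a).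
  rewrite (bigD1 a) //= eqxx (ger0_norm (x := 1 - p a)) ?subr_ge0 //.
  under eq_bigr => b /negbTE -> do rewrite sub0r normrN (ger0_norm (ge0p b)).
  by rewrite sum_ne; ring.
have sd2 a : \sum_b ((b == a)%:R - p b) ^+ 2 <= 2 * (1 - p a).
  rewrite -sd; apply: ler_sum => b _.
  have := hd a b; rewrite -real_normK ?num_real //.
  have := normr_ge0 ((b == a)%:R - p b); nra.
have sv2 : \sum_b (1 - K%:R * p b) ^+ 2 <= 2 * K%:R ^+ 2.
  apply: (@le_trans _ _ (\sum_b (1 + K%:R ^+ 2 * p b))).
    apply: ler_sum => b _.
    have := p1 b; have := ge0p b => h0 h1.
    have h2 : 0 <= K%:R * p b by rewrite mulr_ge0.
    have h3 : K%:R ^+ 2 * (p b * p b) <= K%:R ^+ 2 * p b.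
      by rewrite ler_wpM2l ?sqr_ge0 //; nra.
    nra.
  rewrite big_split /= sumr_const card_ord -mulr_sumr sp mulr1.
  rewrite -[1 *+ K]/(K%:R); nra.
have ie0 : 0 < eta^-1 by rewrite invr_gt0.
pose c := 2 * Rmax * K%:R ^+ 2 / eta + 2 * K%:R ^+ 2 / eta ^+ 2.
have hM a : \sum_b (Rmax ^+ 2 * ((b == a)%:R - p b) ^+ 2
      + 2 * Rmax * `|(b == a)%:R - p b| * `|1 - K%:R * p b| / eta
      + (1 - K%:R * p b) ^+ 2 / eta ^+ 2)
    <= 2 * Rmax ^+ 2 * (1 - p a) + c.
  rewrite !big_split /= /c addrA; apply: lerD; first apply: lerD.
  - rewrite -mulr_sumr.
    have -> : 2 * Rmax ^+ 2 * (1 - p a) = Rmax ^+ 2 * (2 * (1 - p a)) by ring.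
    by rewrite ler_wpM2l ?sqr_ge0.
  - apply: (@le_trans _ _ (\sum_(b < K) (2 * Rmax * K%:R / eta))).
      apply: ler_sum => b _.
      apply: ler_wpM2r; first by rewrite invr_ge0 ltW.
      rewrite -[X in _ <= X]mulr1 -mulrA -[X in _ <= X]mulrA.
      apply: ler_wpM2l; first lra.
      rewrite mulrC; apply: ler_pM => //.
    rewrite sumr_const card_ord -mulr_natr; apply: eqle; field.
    by rewrite gt_eqF.
  - rewrite -mulr_suml; apply: ler_wpM2r => //.
    by rewrite invr_ge0 exprn_ge0 // ltW.
pose rbar := \sum_b p b * r b.
pose Q := \sum_a p a * (1 - p a).
pose S := \sum_a p a * `|r a - rbar|.
have hQ : Q * Delta <= 2 * S.
  have -> : Q * Delta = \sum_a \sum_(b | b != a) p a * p b * Delta.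
    rewrite /Q mulr_suml; apply: eq_bigr => a _.
    by rewrite -sum_ne -mulrA mulr_suml mulr_sumr; apply: eq_bigr => b _; ring.
  apply: (@le_trans _ _ (\sum_a \sum_b p a * p b * `|r a - r b|)).
    apply: ler_sum => a _.
    rewrite [X in _ <= X](bigD1 a) //= subrr normr0 mulr0 add0r.
    apply: ler_sum => b hb; rewrite ler_wpM2l ?mulr_ge0 //.
    by apply: Dr; rewrite eq_sym.
  apply: (@le_trans _ _ (\sum_a \sum_b p a * p b * (`|r a - rbar| + `|r b - rbar|))).
    apply: ler_sum => a _; apply: ler_sum => b _.
    rewrite ler_wpM2l ?mulr_ge0 // (distrC (r b)).
    exact: ler_distD.
  by rewrite dsum_split // /S; apply: eqle; ring.
have hS : S <= K%:R * (G + K%:R / eta).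
  apply: (@le_trans _ _ (\sum_(a < K) (G + K%:R / eta))); last first.
    by rewrite sumr_const card_ord; apply: eqle; exact: esym (mulr_natl _ _).
  apply: ler_sum => a _.
  have -> : p a * `|r a - rbar| = `|p a * (r a - rbar)|.
    by rewrite normrM (ger0_norm (ge0p a)).
  have -> : p a * (r a - rbar) = (p a * (r a - rbar) + eta^-1 * (1 - K%:R * p a))
                                  - eta^-1 * (1 - K%:R * p a) by ring.
  apply: (le_trans (ler_normB _ _)); apply: lerD; first exact: gG.
  rewrite normrM (gtr0_norm ie0) mulrC; apply: ler_wpM2r; [exact: ltW | exact: hv].
have G0 : 0 <= G by apply: le_trans (gG (Ordinal (leq_trans (isT : (0 < 2)%N) K2))).
apply: (@le_trans _ _ (\sum_a p a * (2 * Rmax ^+ 2 * (1 - p a) + c))).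
  by apply: ler_sum => a _; rewrite ler_wpM2l.
have -> : \sum_a p a * (2 * Rmax ^+ 2 * (1 - p a) + c) = 2 * Rmax ^+ 2 * Q + c.
  rewrite /Q mulr_sumr.
  transitivity (\sum_a (2 * Rmax ^+ 2 * (p a * (1 - p a)) + p a * c)).
    by apply: eq_bigr => a _; ring.
  by rewrite big_split /= -mulr_suml sp mul1r.
have hQ' : Q <= 2 * (K%:R * (G + K%:R / eta)) / Delta.
  rewrite ler_pdivlMr //; apply: (le_trans hQ); rewrite ler_wpM2l //.
have X1 : 4 * Rmax ^+ 2 * K%:R / Delta <= C / 2.
  have h : 1 <= 2 * Rmax / Delta by rewrite ler_pdivlMr // mul1r.
  apply: (@le_trans _ _ (8 * Rmax ^+ 3 * K%:R / Delta ^+ 2)); last lra.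
  have -> : 8 * Rmax ^+ 3 * K%:R / Delta ^+ 2 = (4 * Rmax ^+ 2 * K%:R / Delta) * (2 * Rmax / Delta).
    by field; rewrite gt_eqF.
  rewrite ler_peMr //; apply: divr_ge0; last exact: ltW.
  by rewrite mulr_ge0 // mulr_ge0 // ?sqr_ge0 //; lra.
have X2 : 2 * Rmax * K%:R <= C / 2.
  have h : 1 <= 2 * Rmax / Delta by rewrite ler_pdivlMr // mul1r.
  apply: (@le_trans _ _ (8 * Rmax ^+ 3 * K%:R / Delta ^+ 2)); last lra.
  have -> : 8 * Rmax ^+ 3 * K%:R / Delta ^+ 2 = (2 * Rmax * K%:R) * (2 * Rmax / Delta) ^+ 2.
    by field; rewrite gt_eqF.
  rewrite ler_peMr //; first by rewrite mulr_ge0 //; lra.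
  by rewrite expr_ge1 //; lra.
have -> : c = 2 * Rmax * K%:R * (K%:R * eta^-1) + 2 * (K%:R * eta^-1) ^+ 2.
  by rewrite /c; field; rewrite gt_eqF.
have -> : 2 * K%:R / eta * (4 * K%:R / eta + C) = 8 * (K%:R * eta^-1) ^+ 2 + 2 * C * (K%:R * eta^-1).
  by ring.
have Ki : 0 <= K%:R * eta^-1 by rewrite mulr_ge0 // ltW.
set X := 4 * Rmax ^+ 2 * K%:R / Delta in X1.
have hQ2 : 2 * Rmax ^+ 2 * Q <= X * (G + K%:R * eta^-1).
  have -> : X * (G + K%:R * eta^-1) = 2 * Rmax ^+ 2 * (2 * (K%:R * (G + K%:R * eta^-1)) / Delta).
    by rewrite /X; field; rewrite (gt_eqF D0) (gt_eqF e0).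
  by apply: ler_wpM2l; [rewrite mulr_ge0 // sqr_ge0 | exact: hQ'].
have a1 : 0 <= (C / 2 - X) * G by rewrite mulr_ge0 // subr_ge0.
have a2 : 0 <= (C / 2 - X) * (K%:R * eta^-1) by rewrite mulr_ge0 // subr_ge0.
have a3 : 0 <= (C / 2 - 2 * Rmax * K%:R) * (K%:R * eta^-1) by rewrite mulr_ge0 // subr_ge0.
have a4 : 0 <= (K%:R * eta^-1) ^+ 2 by rewrite sqr_ge0.
have X0 : 0 <= X by rewrite /X divr_ge0 ?mulr_ge0 ?sqr_ge0 //; lra.
have C0 : 0 <= C by lra.
have a5 : 0 <= C * G by rewrite mulr_ge0.
have a6 : 0 <= C * (K%:R * eta^-1) by rewrite mulr_ge0.
lra.
Qed.

End Core.

Section Der.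
Variable R : realType.

Lemma derive_line (V : normedModType R) (f : V -> R) (a v : V) (l : R) :
  is_derive (0:R) (1:R) (fun h : R => f (h *: v + a)) l -> 'D_v f a = l.
Proof.
move=> H; rewrite -(@derive_val _ _ _ _ _ _ _ H) /derive.
congr lim.
have E : (fun h : R => h^-1 *: ((f \o shift a) (h *: v) - f a)) =
  (fun h : R => h^-1 *: (((fun h0 : R => f (h0 *: v + a)) \o shift 0) h%:A - f (0 *: v + a))).
  apply/funext => h /=; rewrite scale0r add0r addr0.
  by rewrite /GRing.scale /= mulr1.
by rewrite E.
Qed.

Lemma is_derive_aff (x c t : R) : is_derive x 1 (fun h => h * c + t) c.
Proof.
have := is_deriveD (is_deriveM (is_derive_id x (1:R)) (is_derive_cst c x (1:R)))
   (is_derive_cst t x (1:R)).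
move=> H.
have H' : is_derive x 1 (fun h => h * c + t) (id x *: 0 + cst c x *: 1 + 0) := H.
apply: (is_derive_eq H').
by rewrite /= scaler0 add0r addr0 /GRing.scale /= mulr1.
Qed.

Lemma is_derive_expaff (x c t : R) :
  is_derive x 1 (fun h => expR (h * c + t)) (expR (x * c + t) * c).
Proof.
exact: (@is_derive1_comp R expR (fun h => h * c + t) x (expR (x * c + t)) c
   (is_derive_expR _) (is_derive_aff x c t)).
Qed.


Lemma der_sum (x : R) n (F : 'I_n -> R -> R) (dF : 'I_n -> R) :
  (forall j, is_derive x 1 (F j) (dF j)) ->
  is_derive x 1 (fun y => \sum_j F j y) (\sum_j dF j).
Proof. by move=> H; have := is_derive_sum H; rewrite fct_sumE. Qed.

Lemma der_add (x : R) (f g : R -> R) df dg :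
  is_derive x 1 f df -> is_derive x 1 g dg ->
  is_derive x 1 (fun y => f y + g y) (df + dg).
Proof. by move=> Hf Hg; exact: (is_deriveD Hf Hg). Qed.

Lemma der_mul (x : R) (f g : R -> R) df dg :
  is_derive x 1 f df -> is_derive x 1 g dg ->
  is_derive x 1 (fun y => f y * g y) (f x * dg + g x * df).
Proof. by move=> Hf Hg; exact: (is_deriveM Hf Hg). Qed.

Lemma der_mulr (x k : R) (f : R -> R) df :
  is_derive x 1 f df -> is_derive x 1 (fun y => f y * k) (df * k).
Proof.
move=> Hf.
have H : is_derive x 1 (fun y => f y * k) (f x * 0 + k * df) := der_mul Hf (is_derive_cst k x 1).
by apply: (is_derive_eq H); rewrite mulr0 add0r mulrC.
Qed.

Lemma der_mull (x k : R) (f : R -> R) df :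
  is_derive x 1 f df -> is_derive x 1 (fun y => k * f y) (k * df).
Proof.
move=> Hf.
have H : is_derive x 1 (fun y => k * f y) (k * df + f x * 0) := der_mul (is_derive_cst k x 1) Hf.
by apply: (is_derive_eq H); rewrite mulr0 addr0.
Qed.

Lemma der_inv (x : R) (f : R -> R) df : f x != 0 ->
  is_derive x 1 f df -> is_derive x 1 (fun y => (f y)^-1) (- (f x) ^- 2 * df).
Proof. by move=> h Hf; exact: (is_deriveV h Hf). Qed.

Lemma der_ln (x : R) (f : R -> R) df : 0 < f x ->
  is_derive x 1 f df -> is_derive x 1 (fun y => ln (f y)) ((f x)^-1 * df).
Proof.
move=> h Hf.
have H : is_derive x 1 (fun y => ln (f y)) ((f x)^-1 * df) :=
  @is_derive1_comp R (@ln R) f x _ df (is_derive1_ln h) Hf.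
exact: H.
Qed.

End Der.

Section Grad.
Variables (R : realType) (K : nat).

Lemma Zpos (th : 'cV[R]_K) (a : 'I_K) : 0 < \sum_b expR (th b 0).
Proof.
rewrite (bigD1 a) //=; apply: (@lt_le_trans _ _ (expR (th a 0))); first exact: expR_gt0.
by rewrite lerDl sumr_ge0 // => b _; exact: ltW (expR_gt0 _).
Qed.

Lemma softmax_pos (th : 'cV[R]_K) a : 0 < softmax th a 0.
Proof. by rewrite /softmax mxE divr_gt0 ?expR_gt0 // (Zpos th a). Qed.

Lemma softmax_sum (th : 'cV[R]_K) (a0 : 'I_K) : \sum_a softmax th a 0 = 1.
Proof.
under eq_bigr => a _ do rewrite /softmax mxE.
by rewrite -mulr_suml mulfV // gt_eqF // (Zpos th a0).
Qed.

Lemma softmax_line (th : 'cV[R]_K) i a h :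
  softmax (h *: delta_mx i 0 + th) a 0 =
  expR (h * (a == i)%:R + th a 0) / \sum_b expR (h * (b == i)%:R + th b 0).
Proof.
rewrite /softmax !mxE eqxx andbT; congr (_ / _).
by apply: eq_bigr => b _; rewrite !mxE eqxx andbT.
Qed.

Lemma gradPhi_val (eta : R) (r th : 'cV[R]_K) i :
  gradPhi eta r th i 0 = softmax th i 0 * (r i 0 - \sum_b softmax th b 0 * r b 0)
     + eta^-1 * (1 - K%:R * softmax th i 0).
Proof.
set p := fun a => softmax th a 0.
rewrite /gradPhi mxE; apply: derive_line.
pose q a h := softmax (h *: delta_mx i 0 + th) a 0.
have -> : (fun h : R => Phi eta r (h *: delta_mx i 0 + th)) =
   (fun h => \sum_a q a h * r a 0 + eta^-1 * \sum_a ln (q a h)).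
  apply/funext => h; rewrite /Phi mxE; congr (_ + _).
  by apply: eq_bigr => a _; rewrite mxE.
pose c a : R := (a == i)%:R.
pose Z0 := \sum_b expR (th b 0).
have Z0p : 0 < Z0 by exact: (Zpos th i).
have q0 a : q a 0 = p a by rewrite /q scale0r add0r.
have pE a : p a = expR (th a 0) / Z0 by rewrite /p /softmax mxE.
have dE a : is_derive (0:R) 1 (fun h => expR (h * c a + th a 0)) (expR (th a 0) * c a).
  by apply: (is_derive_eq (is_derive_expaff 0 (c a) (th a 0))); rewrite mul0r add0r.
have dZ : is_derive (0:R) 1 (fun h => \sum_b expR (h * c b + th b 0)) (expR (th i 0)).
  apply: (is_derive_eq (der_sum dE)).
  rewrite (bigD1 i) //= big1 ?addr0 /c ?eqxx ?mulr1 // => b /negbTE ->.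
  by rewrite mulr0.
have Zne : (fun h => \sum_b expR (h * c b + th b 0)) 0 != 0.
  by rewrite /=; under eq_bigr => b _ do rewrite mul0r add0r; rewrite gt_eqF.
have dq a : is_derive (0:R) 1 (q a) (p a * (c a - p i)).
  have -> : q a = (fun h => expR (h * c a + th a 0) * (\sum_b expR (h * c b + th b 0))^-1).
    by apply/funext => h; rewrite /q softmax_line.
  apply: (is_derive_eq (der_mul (dE a) (der_inv Zne dZ))).
  rewrite /=; under eq_bigr => b _ do rewrite mul0r add0r.
  rewrite mul0r add0r !pE -/Z0; field.
  by rewrite gt_eqF.
have dl a : is_derive (0:R) 1 (fun h => ln (q a h)) (c a - p i).
  apply: (is_derive_eq (der_ln _ (dq a))); first by rewrite q0 softmax_pos.
  by rewrite q0 mulrA mulVf ?mul1r // gt_eqF // softmax_pos.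
apply: (is_derive_eq (der_add (der_sum (fun a => der_mulr (r a 0) (dq a)))
                              (der_mull eta^-1 (der_sum dl)))).
congr (_ + _).
  transitivity (\sum_a (p i * (c a * r a 0)) - p i * \sum_a p a * r a 0).
    rewrite mulr_sumr -sumrB; apply: eq_bigr => a _; rewrite /c.
    by case: eqP => [->|_] /=; rewrite ?mulr1n ?mulr0n; ring.
  rewrite -mulr_sumr (bigD1 i) //= big1 ?addr0 /c ?eqxx ?mul1r; last first.
    by move=> b /negbTE ->; rewrite mul0r.
  by rewrite /p /=; ring.
congr (_ * _); rewrite sumrB sumr_const card_ord (bigD1 i) //= big1 ?addr0 /c ?eqxx //.
  by rewrite mulr_natl.
by move=> b /negbTE ->.
Qed.

End Grad.

Section Hat.
Variables (R : realType) (K : nat).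

Lemma gradhat_entry (eta : R) (th : 'cV[R]_K) a x b :
  grad_hat eta th a x b 0 = x * ((b == a)%:R - softmax th b 0)
     + eta^-1 * (1 - K%:R * softmax th b 0).
Proof.
have pa := softmax_pos th a.
rewrite /grad_hat mxE [X in X + _]mxE [X in _ + X]mxE; congr (_ + _); last first.
  by rewrite !mxE.
rewrite (bigD1 a) //= big1 ?addr0; last first.
  by move=> j /negbTE hj; rewrite !mxE hj mulr0.
rewrite !mxE eqxx big_ord1 !mxE.
case: eqP => [->|_] /=; rewrite ?mulr1n ?mulr0n; field;
  by rewrite (gt_eqF (Zpos th a)) gt_eqF ?expR_gt0.
Qed.

Lemma l2norm_sqr (v : 'cV[R]_K) : l2norm v ^+ 2 = \sum_i v i 0 ^+ 2.
Proof. by rewrite /l2norm sqr_sqrtr // sumr_ge0 // => i _; exact: sqr_ge0. Qed.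

Lemma l2norm_ge (v : 'cV[R]_K) i : `|v i 0| <= l2norm v.
Proof.
rewrite /l2norm -sqrtr_sqr ler_sqrt; last by rewrite sumr_ge0 // => j _; exact: sqr_ge0.
by rewrite (bigD1 i) //= lerDl sumr_ge0 // => j _; exact: sqr_ge0.
Qed.

End Hat.

Lemma ptb (R : realType) (x d v eta Rmax : R) : `|x| <= Rmax -> 0 < eta ->
  (x * d + eta^-1 * v) ^+ 2 <=
  Rmax ^+ 2 * d ^+ 2 + 2 * Rmax * `|d| * `|v| / eta + v ^+ 2 / eta ^+ 2.
Proof.
move=> hx e0.
have ie0 : 0 < eta^-1 by rewrite invr_gt0.
have R0 : 0 <= Rmax by apply: le_trans hx.
have h1 : x ^+ 2 <= Rmax ^+ 2.
  by rewrite -real_normK ?num_real // lerXn2r // ?nnegrE.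
have h1' : x ^+ 2 * d ^+ 2 <= Rmax ^+ 2 * d ^+ 2 by rewrite ler_wpM2r // sqr_ge0.
have h2 : x * d * v <= Rmax * `|d| * `|v|.
  apply: le_trans (ler_norm _) _; rewrite !normrM.
  by rewrite ler_wpM2r // ler_wpM2r.
have h2' : eta^-1 * (x * d * v) <= eta^-1 * (Rmax * `|d| * `|v|).
  by rewrite ler_wpM2l // ltW.
rewrite -exprVn.
have -> : 2 * Rmax * `|d| * `|v| / eta = 2 * (eta^-1 * (Rmax * `|d| * `|v|)) by ring.
have -> : (x * d + eta^-1 * v) ^+ 2 = x ^+ 2 * d ^+ 2 + 2 * (eta^-1 * (x * d * v)) + eta^-1 ^+ 2 * v ^+ 2 by ring.
lra.
Qed.

Unset Implicit Arguments.

Theorem lemma5p1 (R : realType) (K : nat) (d : measure_display)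
  (T : measurableType d) (P : probability T R)
  (Rw : 'I_K -> {RV P >-> R}) (Rmax : R) (r : 'cV[R]_K) (Delta eta alpha : R) :
  (2 <= K)%N ->
  (forall a w, `|Rw a w| <= Rmax) ->
  (forall a, 'E_P[Rw a] = (r a 0)%:E)%E ->
  (forall a a', a != a' -> r a 0 != r a' 0) ->
  (forall a a', a != a' -> Delta <= `|r a 0 - r a' 0|) ->
  (exists a a', a != a' /\ Delta = `|r a 0 - r a' 0|) ->
  0 < eta -> 0 < alpha ->
  forall hist : seq ('I_K * T),
    let th := lbsgb_iterate eta alpha (fun a w => Rw a w) hist in
    let C := 16 * Rmax ^+ 3 * K%:R * Num.sqrt K%:R / Delta ^+ 2 in
    let b := 2 * K%:R / eta * (4 * K%:R / eta + C) in
    (\sum_(a < K) (softmax th a 0)%:E *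
       'E_P[fun w => (l2norm (grad_hat eta th a (Rw a w)) ^+ 2)%R]
     <= (C * l2norm (gradPhi eta r th) + b)%:E)%E.
Proof.
move=> K2 Rb Er rne Dle [a1 [a2 [a12 DE]]] e0 al0 hist.
cbv zeta.
set th := lbsgb_iterate _ _ _ hist.
set C := 16 * Rmax ^+ 3 * K%:R * Num.sqrt K%:R / Delta ^+ 2.
have rB a : `|r a 0| <= Rmax.
  have mX : measurable_fun setT (Rw a) := measurable_funPT (Rw a).
  have mA : measurable_fun setT (fun w => `|Rw a w|) :=
    measurableT_comp (@measurable_realfun.normr_measurable R setT) mX.
  have h1 : ('E_P[fun w => `|Rw a w|%R] <= Rmax%:E)%E.
    rewrite -(expectation_cst P Rmax).
    apply: expectation_le => //.
    - by move=> w; exact: le_trans (normr_ge0 _) (Rb a w).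
    - by apply: aeW => w; exact: Rb.
  have h2 : (`|'E_P[Rw a]| <= 'E_P[fun w => `|Rw a w|%R])%E.
    rewrite !unlock.
    apply: le_trans (le_abse_integral P measurableT (f := fun w => (Rw a w)%:E) _) _.
      exact/measurable_realfun.measurable_EFinP.
    rewrite le_eqVlt; apply/orP; left; apply/eqP; congr integral.
  by have := le_trans h2 h1; rewrite Er abse_EFin lee_fin.
have D0 : 0 < Delta by rewrite DE normr_gt0 subr_eq0; exact: rne.
have D2 : Delta <= 2 * Rmax.
  rewrite DE; apply: le_trans (ler_normB _ _) _; have := rB a1; have := rB a2; lra.
have R0 : 0 <= Rmax by lra.
pose p a := softmax th a 0.
pose M a := \sum_b (Rmax ^+ 2 * ((b == a)%:R - p b) ^+ 2
      + 2 * Rmax * `|(b == a)%:R - p b| * `|1 - K%:R * p b| / eta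
      + (1 - K%:R * p b) ^+ 2 / eta ^+ 2).
have hE a : ('E_P[fun w => (l2norm (grad_hat eta th a (Rw a w)) ^+ 2)%R] <= (M a)%:E)%E.
  have fE : (fun w => l2norm (grad_hat eta th a (Rw a w)) ^+ 2) =
      (fun w => \sum_b (Rw a w * ((b == a)%:R - p b) + eta^-1 * (1 - K%:R * p b)) ^+ 2).
    by apply/funext => w; rewrite l2norm_sqr; apply: eq_bigr => b' _; rewrite gradhat_entry.
  rewrite fE.
  have mX : measurable_fun setT (Rw a) := measurable_funPT (Rw a).
  have mf : measurable_fun setT
      (fun w => \sum_b (Rw a w * ((b == a)%:R - p b) + eta^-1 * (1 - K%:R * p b)) ^+ 2).
    apply: measurable_sum => b'.
    exact: (measurable_realfun.measurable_funX 2
              (measurable_realfun.measurable_funD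
                 (measurable_realfun.measurable_funM mX (measurable_cst _))
                 (measurable_cst _))).
  rewrite -(expectation_cst P (M a)).
  apply: expectation_le => //.
  - by move=> w; apply: sumr_ge0 => b' _; exact: sqr_ge0.
  - move=> w; apply: sumr_ge0 => b' _.
    apply: addr_ge0; first apply: addr_ge0.
    + by rewrite mulr_ge0 ?sqr_ge0.
    + by rewrite divr_ge0 ?mulr_ge0 ?normr_ge0 ?ltW //; lra.
    + by rewrite divr_ge0 ?sqr_ge0 ?exprn_ge0 ?ltW.
  - apply: aeW => w; apply: ler_sum => b' _; exact: ptb.
apply: (@le_trans _ _ ((\sum_a p a * M a)%:E)).
  rewrite -sumEFin; apply: lee_sum => a _; rewrite EFinM.
  apply: lee_wpmul2l; last exact: hE.
  by rewrite lee_fin; exact: ltW (softmax_pos _ _).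
rewrite lee_fin.
have K0 : (0 < K)%N by apply: leq_trans K2.
apply: (@core R K p (fun a => r a 0) Rmax Delta eta) => //.
- by move=> a; exact: softmax_pos.
- exact: (softmax_sum th (Ordinal K0)).
- by move=> a; rewrite -gradPhi_val; exact: l2norm_ge.
- rewrite /C; apply: ler_wpM2r; first by rewrite invr_ge0 exprn_ge0 // ltW.
  have s1 : 1 <= Num.sqrt (K%:R : R).
    apply: (@le_trans _ _ (Num.sqrt 1)); first by rewrite sqrtr1.
    by rewrite ler_sqrt // (ler_nat R 1 K) ltnW.
  by rewrite ler_peMr // mulr_ge0 // mulr_ge0 // exprn_ge0.
Qed.
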